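(* For every $n\ge1$ and $k\ge1$ there is a deterministic protocol in the Robertson–Webb query model that runs in $k$ rounds and, for every instance with $n$ players, computes a proportional allocation in which every player receives a single interval, using a total of $O(k\,n^{1+1/k})$ queries.
   Context: Cake cutting: the cake is $[0,1]$; there are $n$ players, each with a private valuation $V_i(I)=\int_I v_i(x)\,dx$ given by a non-negative integrable density $v_i$, normalized so $V_i([0,1])=1$. An allocation is a partition of $[0,1]$ into pieces $A_1,\ldots,A_n$, player $i$ receiving $A_i$; it is proportional if $V_i(A_i)\ge1/n$ for all $i$. Robertson–Webb queries: $\mathrm{Cut}_i(\alpha)$ returns a point $y$ with $V_i([0,y])=\alpha$ (leftmost such point), which becomes a cut point; $\mathrm{Eval}_i(y)$ returns $V_i([0,y])$ for a previously obtained cut point $y$. The output allocation must be demarcated by cut points obtained through queries. A protocol runs in $k$ rounds if in each round it issues a set of queries (to any players) chosen depending only on answers from earlier rounds, then receives all answers. *)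

(* Defs.v *)
From HB Require Import structures.
From mathcomp Require Import all_boot all_order all_algebra.
From mathcomp Require Import all_classical all_reals all_analysis.
Set Implicit Arguments. Unset Strict Implicit. Unset Printing Implicit Defensive.
Import Order.TTheory GRing.Theory Num.Theory.
Local Open Scope classical_set_scope.
Local Open Scope ring_scope.

Section CakeCutting.
Variable R : realType.

Notation mu := (@lebesgue_measure R).

Definition I01 : set R := `[0%R, 1%R].

(* v is a density of a valuation on the cake [0,1]: nonnegative, integrable, total mass 1 *)
Definition is_density (v : R -> R) : Prop :=
  measurable_fun I01 v /\
  (forall x, 0 <= x <= 1 -> 0 <= v x) /\
  mu.-integrable I01 (EFin \o v) /\
  Rintegral mu I01 v = 1.

Definition Vint (v : R -> R) (a b : R) : R := Rintegral mu (`[a, b] : set R) v.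

Definition Vcum (v : R -> R) (y : R) : R := Vint v 0 y.

Definition cut_answer (v : R -> R) (alpha : R) : R :=
  inf [set y | 0 <= y <= 1 /\ Vcum v y = alpha].

(* QCut i alpha = Cut_i(alpha);  QEval i j = Eval_i(y) where y is the j-th cut point
   (0-based) obtained in earlier rounds. *)
Inductive query (n : nat) :=
| QCut of 'I_n & R
| QEval of 'I_n & nat.

Definition transcript (n : nat) := seq (query n * R).

Definition cut_points n (h : transcript n) : seq R :=
  pmap (fun qa : query n * R => match qa.1 with QCut _ _ => Some qa.2 | QEval _ _ => None end) h.

Definition answer n (v : 'I_n -> R -> R) (h : transcript n) (q : query n) : R :=
  match q with
  | QCut i alpha => cut_answer (v i) alpha
  | QEval i j => Vcum (v i) (nth 0 (cut_points h) j)
  end.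

(* A deterministic protocol: a list of rounds, each choosing a batch of queries
   from the transcript of the previous rounds, and an output map giving each player
   the endpoints of its interval as indices into the list (0 :: 1 :: cut points). *)
Record protocol (n : nat) := Protocol {
  rounds : seq (transcript n -> seq (query n));
  output : transcript n -> 'I_n -> nat * nat
}.

Fixpoint run_rounds n (v : 'I_n -> R -> R)
    (rs : seq (transcript n -> seq (query n))) (h : transcript n) : transcript n :=
  match rs with
  | [::] => h
  | r :: rs' => run_rounds v rs' (h ++ [seq (q, answer v h q) | q <- r h])
  end.

Definition run n (P : protocol n) (v : 'I_n -> R -> R) : transcript n :=
  run_rounds v (rounds P) [::].

Definition num_queries n (P : protocol n) (v : 'I_n -> R -> R) : nat :=
  size (run P v).

Definition points n (h : transcript n) : seq R := 0 :: 1 :: cut_points h.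

Definition left_end n (P : protocol n) v (i : 'I_n) : R :=
  nth 0 (points (run P v)) (output P (run P v) i).1.
Definition right_end n (P : protocol n) v (i : 'I_n) : R :=
  nth 0 (points (run P v)) (output P (run P v) i).2.

Definition interval_partition n (a b : 'I_n -> R) : Prop :=
  (forall i, 0 <= a i /\ a i <= b i /\ b i <= 1) /\
  (forall i j, i != j -> b i <= a j \/ b j <= a i) /\
  \sum_(i < n) (b i - a i) = 1.

Definition valid_indices n (P : protocol n) v : Prop :=
  forall i, ((output P (run P v) i).1 < size (points (run P v)))%N /\
            ((output P (run P v) i).2 < size (points (run P v)))%N.

Definition proportional_interval_output n (P : protocol n) (v : 'I_n -> R -> R) : Prop :=
  valid_indices P v /\
  interval_partition (left_end P v) (right_end P v) /\
  forall i, Vint (v i) (left_end P v i) (right_end P v i) >= n%:R^-1.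

End CakeCutting.

(* Main.v *)
Set Warnings "-notation-overridden,-ambiguous-paths,-notation-incompatible-prefix,-deprecated".
Require Import Defs.
From HB Require Import structures.
From mathcomp Require Import all_boot all_order all_algebra.
From mathcomp Require Import all_classical all_reals all_analysis.
Set Implicit Arguments. Unset Strict Implicit. Unset Printing Implicit Defensive.
Import Order.TTheory GRing.Theory Num.Theory numFieldNormedType.Exports.
Local Open Scope classical_set_scope.
Local Open Scope ring_scope.
Section Comb.
Variables (R : realType) (n : nat).

Record sp := SP { pl : seq 'I_n; bs : nat; xl : R; yr : R }.

Definition keyrel : rel ('I_n * R) := fun p q => p.2 <= q.2.

Fixpoint mx (x : R) (s : seq ('I_n * R)) : R :=
  match s with [::] => x | p :: s' => Num.max p.2 (mx x s') end.

Lemma mx_ge0 x s : x <= mx x s.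
Proof. elim: s => //= p s IH; by rewrite le_max IH orbT. Qed.

Lemma mx_ge x s : all (fun p => p.2 <= mx x s) s.
Proof.
elim: s => //= p s IH; rewrite le_max lexx /=.
apply/allP => q qs; rewrite le_max (allP IH q qs) orbT //.
Qed.

Lemma mx_le x s c : x <= c -> all (fun p => p.2 <= c) s -> mx x s <= c.
Proof. elim: s => //= p s IH xc /andP[pc sc]; rewrite ge_max pc IH //. Qed.

Lemma mx_mem x s (P : pred R) : P x -> all (fun p => P p.2) s -> P (mx x s).
Proof.
elim: s => //= p s IH Px /andP[Pp As].
by case: (leP p.2 (mx x s)) => _; [apply: IH|].
Qed.

Lemma sorted_cross (s1 s2 : seq ('I_n * R)) :
  sorted keyrel (s1 ++ s2) -> all (fun p => all (fun q => p.2 <= q.2) s2) s1.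
Proof.
have tr : transitive keyrel by move=> a b c; rewrite /keyrel; apply: le_trans.
elim: s1 => //= p s1 IH H.
have := order_path_min tr H; rewrite all_cat => /andP[_ ->] /=.
apply: IH; exact: path_sorted H.
Qed.

Fixpoint grp (M : 'I_n -> nat -> R) (g f b : nat) (rem : seq 'I_n) (x y : R) : seq sp :=
  match f with
  | 0 => [:: SP rem b x y]
  | f'.+1 => if (size rem <= g)%N then [:: SP rem b x y] else
     let s := sort keyrel [seq (i, M i (b + g)%N) | i <- rem] in
     let x' := mx x (take g s) in
     SP (map fst (take g s)) b x x' :: grp M g f' (b + g) (map fst (drop g s)) x' y
  end.


Lemma sortmap_fst (M : 'I_n -> nat -> R) a rem :
  perm_eq (map fst (sort keyrel [seq (j, M j a) | j <- rem])) rem.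
Proof.
have E : map fst [seq (j, M j a) | j <- rem] = rem by elim: rem => //= j r ->.
rewrite -{2}E; apply: perm_map; rewrite perm_sort //.
Qed.

Lemma grp_ext M M' g f : forall b rem x y,
  (forall i t, i \in rem -> (1 <= t <= f)%N -> M i (b + g * t)%N = M' i (b + g * t)%N) ->
  grp M g f b rem x y = grp M' g f b rem x y.
Proof.
elim: f => [//|f IH] b rem x y H /=.
case: ifP => // _.
have -> : [seq (i, M i (b + g)%N) | i <- rem] = [seq (i, M' i (b + g)%N) | i <- rem].
  apply/eq_in_map => i ir; have := H i 1%N ir; rewrite muln1 => ->//.
congr cons; apply: IH => i t it /andP[t1 tf].
rewrite -addnA -mulnS; apply: H; last by rewrite ltnW.
move: it => /mapP[p pd ->].
rewrite -(perm_mem (sortmap_fst M' (b + g) rem)).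
apply/mapP; exists p => //; exact: mem_drop pd.
Qed.


Definition lvl M g f (st : seq sp) : seq sp :=
  flatten [seq grp M g f (bs p) (pl p) (xl p) (yr p) | p <- st].

Definition qp g f (st : seq sp) : seq ('I_n * nat) :=
  flatten [seq [seq (i, (bs p + g * t)%N) | i <- pl p, t <- iota 1 f] | p <- st].

Lemma lvl_ext M M' g f st :
  (forall q, q \in qp g f st -> M q.1 q.2 = M' q.1 q.2) -> lvl M g f st = lvl M' g f st.
Proof.
elim: st => //= p st IH H; rewrite /lvl /=; congr cat.
  apply: grp_ext => i t ir /andP[t1 tf]; apply: (H (i, (bs p + g * t)%N)).
  rewrite /qp /= mem_cat; apply/orP; left; apply/allpairsP; exists (i, t) => /=.
  by rewrite ir mem_iota t1 add1n ltnS tf.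
apply: IH => q qq; apply: H; rewrite /qp /= mem_cat qq orbT //.
Qed.

Fixpoint chain (st : seq sp) (x0 y0 : R) : bool :=
  match st with [::] => x0 == y0 | p :: st' => (xl p == x0) && chain st' (yr p) y0 end.

Lemma chain_cat s1 s2 x y z : chain s1 x y -> chain s2 y z -> chain (s1 ++ s2) x z.
Proof.
elim: s1 x => [|p s1 IH] x /=; first by move/eqP ->.
by move=> /andP[-> c1] c2; rewrite IH.
Qed.

Section Inv.
Variable M : 'I_n -> nat -> R.
Hypothesis Hmono : forall i j j', (j <= j')%N -> (j' <= n)%N -> M i j <= M i j'.

Definition spok cap (p : sp) : bool :=
  [&& (0 < size (pl p))%N, (size (pl p) <= cap)%N, (bs p + size (pl p) <= n)%N &
    all (fun i => (xl p <= M i (bs p)) && (M i (bs p + size (pl p))%N <= yr p)) (pl p)].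

Lemma grp_ok g : (0 < g)%N -> forall f b rem x y, spok (g * f.+1) (SP rem b x y) ->
  [&& chain (grp M g f b rem x y) x y, all (spok g) (grp M g f b rem x y) &
      perm_eq (flatten (map pl (grp M g f b rem x y))) rem].
Proof.
move=> g0; elim=> [|f IH] b rem x y.
  by rewrite muln1 /= !eqxx /= cats0 perm_refl andbT => ->.
move=> H; have H' := H; move: H' => /and4P[/= H0 Hcap Hn Hall] /=.
case: ifP => Hsz.
  by rewrite /= !eqxx /= cats0 perm_refl !andbT /spok /= H0 Hsz Hn Hall.
set s := sort keyrel _.
have Hs : forall p, p \in s -> (p.1 \in rem) /\ p.2 = M p.1 (b + g)%N.
  move=> p; rewrite /s (perm_mem (permEl (perm_sort _ _))) => /mapP[j jr ->] //.
have szs : size s = size rem by rewrite size_sort size_map.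
have gs : (g < size s)%N by rewrite szs ltnNge Hsz.
have szT : size (take g s) = g by rewrite size_take gs.
have szD : size (drop g s) = (size rem - g)%N by rewrite size_drop szs.
have srt : sorted keyrel (take g s ++ drop g s).
  rewrite cat_take_drop; apply: sort_sorted => p q; rewrite /keyrel; exact: le_total.
have cross := sorted_cross srt.
set x' := mx x (take g s).
have Hall' : forall i, i \in rem -> (x <= M i b) /\ (M i (b + size rem)%N <= y).
  by move=> i ir; have /andP[] := allP Hall i ir.
have Hrest : spok (g * f.+1) (SP [seq p.1 | p <- drop g s] (b + g) x' y).
  rewrite /spok /= size_map szD subn_gt0 ltnNge Hsz /=.
  have -> : (b + g + (size rem - g) = b + size rem)%N.
    by rewrite -addnA subnKC // ltnW // ltnNge Hsz.
  rewrite Hn /=; apply/andP; split.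
    by rewrite leq_subLR -mulnS.
  apply/allP => i /mapP[q qD ->].
  have qs : q \in s by apply: mem_drop qD.
  have [q1 q2] := Hs q qs.
  have [h1 h2] := Hall' _ q1.
  rewrite h2 andbT -q2; apply: mx_le.
    rewrite q2; apply: le_trans h1 _; apply: Hmono; first exact: leq_addr.
    by apply: leq_trans Hn; rewrite leq_add2l ltnW // ltnNge Hsz.
  by apply/allP => p pT; have := allP cross p pT => /allP /(_ q qD).
have /and3P[c1 c2 c3] := IH _ _ _ _ Hrest.
rewrite /= eqxx c1 c2 /= !andbT; apply/andP; split.
  rewrite /spok /= size_map szT g0 leqnn /=.
  have -> : (b + g <= n)%N.
    by apply: leq_trans Hn; rewrite leq_add2l ltnW // ltnNge Hsz.
  apply/allP => i /mapP[p pT ->].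
  have ps : p \in s by apply: mem_take pT.
  have [p1 p2] := Hs p ps.
  have [h1 h2] := Hall' _ p1.
  rewrite h1 /= -p2; exact: (allP (mx_ge x (take g s)) p pT).
apply: perm_trans (sortmap_fst M (b + g) rem).
rewrite -/s -{3}(cat_take_drop g s) map_cat perm_cat2l //.
Qed.


Lemma spok_le cap p : spok cap p -> xl p <= yr p.
Proof.
case/and4P; case: p => [[|i l] b x y] //= _ _ Hn /andP[/andP[h1 h2] _].
apply: le_trans h1 (le_trans _ h2); apply: Hmono => //; exact: leq_addr.
Qed.

Lemma lvl_ok g f : (0 < g)%N -> forall st x0 y0, chain st x0 y0 -> all (spok (g * f.+1)) st ->
  [&& chain (lvl M g f st) x0 y0, all (spok g) (lvl M g f st) &
      perm_eq (flatten (map pl (lvl M g f st))) (flatten (map pl st))].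
Proof.
move=> g0; elim=> [|p st IH] x0 y0 /=; first by rewrite /lvl /= => -> /=.
move=> /andP[/eqP px c] /andP[sp sa].
have /and3P[c1 c2 c3] := IH _ _ c sa.
case: p px sp c c1 c2 c3 => pl0 bs0 xl0 yr0 /= -> sp c c1 c2 c3.
have /and3P[d1 d2 d3] := grp_ok g0 sp.
rewrite /lvl /= in c1 c2 c3 *.
rewrite (chain_cat d1 c1) all_cat d2 c2 /=.
by rewrite map_cat flatten_cat; apply: perm_cat.
Qed.

End Inv.

Lemma size_qp g f st : size (qp g f st) = (size (flatten (map pl st)) * f)%N.
Proof.
elim: st => //= p st IH; rewrite /qp /= size_cat size_allpairs size_iota -/(qp g f st) IH.
by rewrite size_cat mulnDl.
Qed.

Lemma grp_pts (P : pred R) M g f : forall b rem x y, (forall i j, P (M i j)) -> P x -> P y ->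
  all (fun p => P (xl p) && P (yr p)) (grp M g f b rem x y).
Proof.
elim: f => [|f IH] b rem x y HM Px Py /=; first by rewrite Px Py.
case: ifP => _ /=; first by rewrite Px Py.
set s := sort keyrel _.
have Hx' : P (mx x (take g s)).
  apply: mx_mem => //; apply/allP => p /mem_take.
  rewrite /s (perm_mem (permEl (perm_sort _ _))) => /mapP[j _ ->] //=.
by rewrite Px Hx' /=; apply: IH.
Qed.

Lemma lvl_pts (P : pred R) M g f st : (forall i j, P (M i j)) ->
  all (fun p => P (xl p) && P (yr p)) st -> all (fun p => P (xl p) && P (yr p)) (lvl M g f st).
Proof.
move=> HM; elim: st => //= p st IH /andP[/andP[h1 h2] h3].
rewrite /lvl /= all_cat grp_pts //; exact: IH.
Qed.

Section State.
Variables (m k : nat).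
Definition gsz r := (m ^ (k - r.+1))%N.
Fixpoint state M r : seq sp :=
  match r with
  | 0 => [:: SP (enum 'I_n) 0 0 1]
  | r'.+1 => lvl M (gsz r') m.-1 (state M r')
  end.

Lemma state_pts (P : pred R) M r : (forall i j, P (M i j)) -> P 0 -> P 1 ->
  all (fun p => P (xl p) && P (yr p)) (state M r).
Proof.
move=> HM P0 P1; elim: r => [|r IH] /=; first by rewrite P0 P1.
exact: lvl_pts.
Qed.

Lemma state_ok M : (forall i j j', (j <= j')%N -> (j' <= n)%N -> M i j <= M i j') ->
  (forall i, 0 <= M i 0) -> (forall i, M i n <= 1) -> (0 < n)%N -> (n <= m ^ k)%N -> (0 < m)%N ->
  forall r, (r <= k)%N ->
  [&& chain (state M r) 0 1, all (spok M (m ^ (k - r))) (state M r) &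
      perm_eq (flatten (map pl (state M r))) (enum 'I_n)].
Proof.
move=> Hmono H0 H1 n0 nm m0; elim=> [|r IH] rk.
  rewrite /= !eqxx subn0 /= cats0 perm_refl /spok /= size_enum_ord n0 nm leqnn /=.
  have -> : all (fun i => (0 <= M i 0%N) && (M i (0 + n)%N <= 1)) (enum 'I_n).
    by apply/allP => i _; rewrite H0 H1.
  by [].
have /and3P[c1 c2 c3] := IH (ltnW rk).
have E : (m ^ (k - r) = gsz r * (m.-1).+1)%N.
  rewrite prednK // /gsz mulnC -expnS; congr (m ^ _)%N.
  by rewrite subnSK.
rewrite E in c2.
have g0 : (0 < gsz r)%N by rewrite /gsz expn_gt0 m0.
have /and3P[d1 d2 d3] := lvl_ok Hmono g0 c1 c2.
by rewrite /= d1 /gsz -/(gsz r) d2 (perm_trans d3 c3).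
Qed.

End State.


Definition dflt : sp := SP [::] 0 0 0.
Definition pos (st : seq sp) (i : 'I_n) : nat := find (fun p => i \in pl p) st.
Definition spi (st : seq sp) (i : 'I_n) : sp := nth dflt st (pos st i).

Lemma flat_has (st : seq sp) i : i \in flatten (map pl st) -> has (fun p => i \in pl p) st.
Proof. elim: st => //= p st IH; rewrite mem_cat => /orP[->//|/IH ->]; by rewrite orbT. Qed.

Lemma chain_bnd st x0 y0 : chain st x0 y0 -> all (fun p => xl p <= yr p) st ->
  x0 <= y0 /\ forall l, (l < size st)%N -> x0 <= xl (nth dflt st l) /\ yr (nth dflt st l) <= y0.
Proof.
elim: st x0 => [|p st IH] x0 /=; first by move/eqP ->.
move=> /andP[/eqP px c] /andP[pxy a]; have [h1 h2] := IH _ c a.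
split; first by rewrite -px (le_trans pxy h1).
case=> [|l] /=; first by rewrite px lexx.
move=> /h2 [h3 ->]; rewrite -px (le_trans pxy h3) //.
Qed.

Lemma chain_ord st x0 y0 : chain st x0 y0 -> all (fun p => xl p <= yr p) st ->
  forall l l', (l < l')%N -> (l' < size st)%N -> yr (nth dflt st l) <= xl (nth dflt st l').
Proof.
elim: st x0 => [|p st IH] x0 //= /andP[/eqP px c] /andP[pxy a] l l'.
case: l' => [//|l'] /=; case: l => [|l] /= ll' ls.
  by have [_ /(_ l' ls) []] := chain_bnd c a.
exact: IH c a l l' ll' ls.
Qed.

Lemma sum_chain st x0 y0 : chain st x0 y0 -> all (fun p => size (pl p) == 1%N) st ->
  uniq (flatten (map pl st)) ->
  \sum_(i <- flatten (map pl st)) (yr (spi st i) - xl (spi st i)) = y0 - x0.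
Proof.
elim: st x0 => [|p st IH] x0 /=; first by move/eqP ->; rewrite big_nil subrr.
move=> /andP[/eqP px c] /andP[sz a].
case: p px sz c => [[|q [|q' l]]] b xp yp //= px _ c.
rewrite big_cons => /andP[qn u].
rewrite /spi /pos /= mem_seq1 eqxx /=.
rewrite (eq_big_seq (fun i => yr (spi st i) - xl (spi st i))); last first.
  move=> i ist; rewrite /spi /pos /= mem_seq1.
  by have -> : (i == q) = false by apply/negbTE; apply: contraNneq qn => <-.
by rewrite (IH _ c a u) px addrC addrA subrK.
Qed.

End Comb.
Section Meas.
Variables (R : realType) (v : R -> R).
Hypothesis hv : is_density v.
Notation mu := (@lebesgue_measure R).

Lemma int_sub (a b : R) : 0 <= a -> b <= 1 ->
  mu.-integrable [set` `[a, b]] (EFin \o v).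
Proof.
move=> a0 b1; have [_ [_ [hi _]]] := hv.
apply: (integrableS _ _ _ hi); [exact: measurable_itv|exact: measurable_itv|].
move=> z /=; rewrite /I01 !in_itv /= => /andP[az zb].
by rewrite in_itv /= (le_trans a0 az) (le_trans zb b1).
Qed.

Lemma int_sub_oc (a b : R) : 0 <= a -> b <= 1 ->
  mu.-integrable [set` `]a, b]] (EFin \o v).
Proof.
move=> a0 b1; have [_ [_ [hi _]]] := hv.
apply: (integrableS _ _ _ hi); [exact: measurable_itv|exact: measurable_itv|].
move=> z /=; rewrite /I01 !in_itv /= => /andP[az zb].
by rewrite in_itv /= (le_trans a0 (ltW az)) (le_trans zb b1).
Qed.

Lemma Vint_sub (c b : R) : 0 <= c -> c <= b -> b <= 1 -> Vint v c b = Vcum v b - Vcum v c.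
Proof.
move=> c0 cb b1; rewrite /Vcum /Vint.
have := @Rintegral_itvB _ v (BLeft 0) (BRight b) c (int_sub (lexx 0) b1).
rewrite !bnd_simp => /(_ c0 cb) ->.
by rewrite Rintegral_itv_obnd_cbnd // int_sub_oc.
Qed.

Lemma Vint_ge0 (c b : R) : 0 <= c -> b <= 1 -> 0 <= Vint v c b.
Proof.
move=> c0 b1; have [_ [hp _]] := hv.
apply: Rintegral_ge0 => z /=; rewrite in_itv /= => /andP[cz zb].
by apply: hp; rewrite (le_trans c0 cz) (le_trans zb b1).
Qed.

Lemma Vcum_mono (c b : R) : 0 <= c -> c <= b -> b <= 1 -> Vcum v c <= Vcum v b.
Proof.
move=> c0 cb b1; rewrite -subr_ge0 -Vint_sub //; exact: Vint_ge0.
Qed.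

Lemma Vcum0 : Vcum v 0 = 0.
Proof. by rewrite /Vcum /Vint set_itv1 Rintegral_set1. Qed.

Lemma Vcum1 : Vcum v 1 = 1.
Proof. by have [_ [_ [_ h]]] := hv. Qed.

Lemma Vcum_cont : {within `[0, 1], continuous (Vcum v)}.
Proof.
have [_ [_ [hi _]]] := hv.
have := @parameterized_integral_continuous R 0 1 v ler01 hi.
by [].
Qed.


Lemma cut_ok (a : R) : 0 <= a <= 1 ->
  [/\ 0 <= cut_answer v a, cut_answer v a <= 1 & Vcum v (cut_answer v a) = a].
Proof.
move=> /andP[a0 a1].
set S := [set y | 0 <= y <= 1 /\ Vcum v y = a].
have [c0 c0in fc0] : exists2 c, c \in `[(0:R), 1] & Vcum v c = a.
  apply: (IVT ler01 Vcum_cont).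
  by rewrite Vcum0 Vcum1 ge_min le_max a0 a1 orbT.
move: c0in; rewrite in_itv /= => /andP[c00 c01].
have Sc0 : S c0 by split => //; rewrite c00 c01.
have hlb : has_lbound S by exists 0 => y [/andP[]].
have hne : S !=set0 by exists c0.
have cle : cut_answer v a <= c0 by apply: ge_inf.
have c0le : 0 <= cut_answer v a by apply: lb_le_inf => // y [/andP[]].
set c := cut_answer v a in cle c0le *.
have c1 : c <= 1 by apply: le_trans cle c01.
split => //.
have fcle : Vcum v c <= a by rewrite -fc0; apply: Vcum_mono.
have [ceq|clt] := eqVneq c c0; first by rewrite ceq.
have clt' : c < c0 by rewrite lt_neqAle clt cle.
apply/eqP; rewrite eq_le fcle /=; rewrite leNgt; apply/negP => fclt.
have cr : Vcum v x @[x --> c^'+] --> Vcum v c.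
  have [c00'|c0p] := eqVneq c 0.
    rewrite c00'; have /(continuous_within_itvP _ ltr01) [_ h _] := Vcum_cont.
    exact: h.
  apply: cvg_at_right_filter.
  apply: (within_continuous_continuous ltr01 Vcum_cont).
  rewrite in_itv /= (lt_le_trans clt' c01) andbT lt_neqAle eq_sym c0p //.
have e0 : 0 < a - Vcum v c by rewrite subr_gt0.
move: cr => /cvgrPdist_lt /(_ _ e0) [d /= d0 Hd].
have hinf : has_inf S by split.
have [y [/andP[y0 y1] fy] yd] := inf_adherent d0 hinf.
have Sy : S y by split => //; rewrite y0 y1.
have cy : c <= y := ge_inf hlb Sy.
have [cyeq|cyne] := eqVneq c y.
  by move: fclt; rewrite cyeq fy ltxx.
have cylt : c < y by rewrite lt_neqAle cyne cy.
have := Hd y _ cylt.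
rewrite fy ltr0_norm ?subr_lt0 // opprB ltxx => H; suff : false by []; apply: H.
rewrite /ball_ /= ltr0_norm ?subr_lt0 // opprB.
by rewrite ltrBlDl.
Qed.

End Meas.
Section Proto.
Variables (R : realType) (n m k : nat).

Definition matches (p : 'I_n * nat) (qa : query R n * R) : bool :=
  match qa.1 with
  | QCut i a => (i == p.1) && (a == p.2%:R / n%:R)
  | QEval _ _ => false
  end.

Fixpoint lk (h : transcript R n) (i : 'I_n) (j : nat) : R :=
  match h with
  | [::] => 0
  | qa :: h' => if matches (i, j) qa then qa.2 else lk h' i j
  end.

Definition correct (v : 'I_n -> R -> R) (qa : query R n * R) : bool :=
  match qa.1 with
  | QCut i a => qa.2 == cut_answer (v i) a
  | QEval _ _ => true
  end.

Definition mkq (p : 'I_n * nat) : query R n := QCut p.1 (p.2%:R / n%:R).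

Definition roundf r (h : transcript R n) : seq (query R n) :=
  map mkq (qp (gsz m k r) m.-1 (state m k (lk h) r)).

Definition outp (h : transcript R n) (i : 'I_n) : nat * nat :=
  let p := spi (state m k (lk h) k) i in
  (index (xl p) (points h), index (yr p) (points h)).

Definition proto : protocol R n := Protocol [seq roundf r | r <- iota 0 k] outp.

Lemma lk_pts h i j : lk h i j \in points h.
Proof.
elim: h => [|qa h IH] /=; first by rewrite /points inE eqxx.
have sub : {subset points h <= points (qa :: h)}.
  move=> x; rewrite /points /cut_points !inE /=.
  case: qa => [[i' a|i' l] ans] //=; rewrite ?inE.
  by case/or3P => ->; rewrite ?orbT.
case: ifP => [mt|_]; last exact: sub.
clear sub IH.
case: qa mt => [[i' a|i' l] ans] //= _.
by rewrite /points /cut_points /= !inE eqxx !orbT.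
Qed.

Lemma lk_ok v h i j : all (correct v) h -> has (matches (i, j)) h ->
  lk h i j = cut_answer (v i) (j%:R / n%:R).
Proof.
elim: h => [|qa h IH] //= /andP[c a].
case: ifP => mt /=.
  move: c mt; case: qa => [[i' a'|i' l] ans] //= /eqP /= -> /andP[/eqP /= -> /eqP /= ->].
  by [].
exact: IH.
Qed.


Section Run.
Variable v : 'I_n -> R -> R.
Hypothesis hv : forall i, is_density (v i).
Hypotheses (n0 : (0 < n)%N) (nm : (n <= m ^ k)%N) (m0 : (0 < m)%N).

Definition mk (i : 'I_n) (j : nat) : R := cut_answer (v i) (j%:R / n%:R).

Lemma frac_in j : (j <= n)%N -> 0 <= (j%:R / n%:R : R) <= 1.
Proof.
move=> jn; have n0' : 0 < n%:R :> R by rewrite ltr0n.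
by rewrite divr_ge0 ?ler0n //= ler_pdivrMr // mul1r ler_nat.
Qed.

Lemma mk_ok i j : (j <= n)%N ->
  [/\ 0 <= mk i j, mk i j <= 1 & Vcum (v i) (mk i j) = j%:R / n%:R].
Proof. by move=> jn; apply: cut_ok => //; apply: frac_in. Qed.

Lemma mk_mono i j j' : (j <= j')%N -> (j' <= n)%N -> mk i j <= mk i j'.
Proof.
move=> jj jn; have jn' := leq_trans jj jn.
have [a0 a1 av] := mk_ok i jn'; have [b0 b1 bv] := mk_ok i jn.
rewrite leNgt; apply/negP => lt.
have := Vcum_mono (hv i) b0 (ltW lt) a1; rewrite av bv.
have n0' : 0 < n%:R :> R by rewrite ltr0n.
rewrite ler_pM2r ?invr_gt0 // ler_nat => jj'.
have ej : j = j' by apply/eqP; rewrite eqn_leq jj jj'.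
by move: lt; rewrite ej ltxx.
Qed.

Lemma mk0 i : 0 <= mk i 0. Proof. by have [] := mk_ok i (leq0n n). Qed.
Lemma mkn i : mk i n <= 1. Proof. by have [] := mk_ok i (leqnn n). Qed.

Definition Good r (h : transcript R n) : Prop :=
  all (correct v) h /\ forall r', (r' < r)%N -> forall p,
    p \in qp (gsz m k r') m.-1 (state m k mk r') -> has (matches p) h.

Lemma state_eq r h : Good r h -> forall r', (r' <= r)%N -> state m k (lk h) r' = state m k mk r'.
Proof.
move=> [hc hh]; elim=> [//|r' IH] rr /=.
rewrite IH ?(ltnW rr) //; apply: lvl_ext => q qin.
by case: q qin => i j qin; rewrite (lk_ok hc (hh _ rr _ qin)).
Qed.

Lemma size_qp_mk r : (r <= k)%N -> size (qp (gsz m k r) m.-1 (state m k mk r)) = (n * m.-1)%N.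
Proof.
move=> rk; have /and3P[_ _ hp] := state_ok mk_mono mk0 mkn n0 nm m0 rk.
by rewrite size_qp (perm_size hp) size_enum_ord.
Qed.

Lemma run_good d : forall r h, (r + d <= k)%N -> Good r h ->
  Good (r + d) (run_rounds v [seq roundf x | x <- iota r d] h) /\
  size (run_rounds v [seq roundf x | x <- iota r d] h) = (size h + d * (n * m.-1))%N.
Proof.
elim: d => [|d IH] r h rd G /=; first by rewrite addn0 mul0n addn0.
have rk : (r < k)%N by apply: leq_trans rd; rewrite addnS ltnS leq_addr.
have E : roundf r h = map mkq (qp (gsz m k r) m.-1 (state m k mk r)).
  by rewrite /roundf (state_eq G (leqnn r)).
set h1 := h ++ _.
have G1 : Good r.+1 h1.
  case: G => hc hh; split.
    rewrite all_cat hc /= E !all_map; apply/allP => p _ /=.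
    by rewrite /correct /= eqxx.
  move=> r' r'r p pin; rewrite has_cat; apply/orP.
  move: r'r; rewrite ltnS leq_eqVlt => /orP[/eqP er|lt]; last by left; apply: hh lt _ pin.
  right; rewrite E !has_map; apply/hasP; exists p; first by rewrite -er.
  by rewrite /= /matches /= !eqxx.
have [G2 S2] := IH r.+1 h1 ltac:(by rewrite addSnnS) G1.
rewrite -addSnnS; split => //; rewrite S2 /h1 size_cat size_map E size_map size_qp_mk ?(ltnW rk) //.
by rewrite mulSn addnA.
Qed.

End Run.

End Proto.

Local Close Scope classical_set_scope.

Theorem proposition14 :
  exists C : nat, forall (R : realType) (n k : nat), (1 <= n)%N -> (1 <= k)%N ->
    exists P : protocol R n,
      size (rounds P) = k /\
      forall v : 'I_n -> R -> R, (forall i, is_density (v i)) ->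
        proportional_interval_output P v /\
        (num_queries P v)%:R <= C%:R * k%:R * (n%:R `^ (1 + k%:R^-1) : R).
Proof.
exists 1%N => R n k n1 k1.
have exP : exists m, (n <= m ^ k)%N.
  by exists n; rewrite -{1}(expn1 n) leq_pexp2l.
have [m nm mmin] := ex_minnP exP.
have m0 : (0 < m)%N.
  by case: m nm mmin => // nm _; move: nm; rewrite exp0n // leqn0 => /eqP n00; move: n1; rewrite n00.
have mlt : (m.-1 ^ k < n)%N.
  rewrite ltnNge; apply/negP => H; have := mmin _ H.
  by rewrite -ltnS prednK // ltnn.
exists (proto R n m k); split; first by rewrite /= size_map size_iota.
move=> v hv.
have G0 : Good m k v 0 [::] by split => // r'.
have [G S] := @run_good _ _ _ _ _ hv n1 nm m0 k 0 [::] (leqnn k) G0.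
rewrite add0n in G S.
set H := run_rounds v _ [::] in G S.
have runE : run (proto R n m k) v = H by [].
have SE := state_eq G (leqnn k).
have /and3P[c1 c2 c3] := state_ok (mk_mono hv n1) (mk0 hv n1) (mkn hv n1) n1 nm m0 (leqnn k).
rewrite subnn expn0 in c2.
set st := state m k (mk v) k in SE c1 c2 c3.
have hpos i : (pos st i < size st)%N.
  by rewrite -has_find; apply: flat_has; rewrite (perm_mem c3) mem_enum.
have hinp i : i \in pl (spi st i).
  by rewrite /spi /pos; apply: (nth_find _ (a := fun p => i \in pl p)); rewrite has_find hpos.
move/(all_nthP (@dflt R n)): (c2) => c2'.
have hsp i : spok (mk v) 1 (spi st i) by apply: c2'.
have hall_le : all (fun p => xl p <= yr p) st.
  by apply: (sub_all _ c2) => p hp; apply: (spok_le (mk_mono hv n1) hp).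
have hone i : [/\ pl (spi st i) = [:: i], (bs (spi st i) + 1 <= n)%N,
    xl (spi st i) <= mk v i (bs (spi st i)) & mk v i (bs (spi st i) + 1) <= yr (spi st i)].
  move: (hsp i) (hinp i); case: (spi st i) => [[|a [|b l]]] bb x y; rewrite /spok /=.
  - by [].
  - move=> /andP[hn /andP[/andP[h1 h2] _]].
    by rewrite inE => /eqP ->; split.
  - by [].
have hbnd i : 0 <= xl (spi st i) /\ yr (spi st i) <= 1.
  by have [_ h] := chain_bnd c1 hall_le; apply: h.
have hxy i : xl (spi st i) <= yr (spi st i) := spok_le (mk_mono hv n1) (hsp i).
have hpts : all (fun p => (xl p \in points H) && (yr p \in points H)) st.
  rewrite -SE; apply: (@state_pts _ _ m k (fun x => x \in points H)).
  - exact: lk_pts.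
  - by rewrite inE eqxx.
  - by rewrite !inE eqxx orbT.
move/(all_nthP (@dflt R n)): hpts => hpts.
have hptsi i : (xl (spi st i) \in points H) && (yr (spi st i) \in points H).
  by apply: hpts.
have LE i : left_end (proto R n m k) v i = xl (spi st i).
  rewrite /left_end runE /= /outp SE /= nth_index //.
  by have /andP[] := hptsi i.
have RE i : right_end (proto R n m k) v i = yr (spi st i).
  rewrite /right_end runE /= /outp SE /= nth_index //.
  by have /andP[] := hptsi i.
split; last first.
  rewrite /num_queries runE S /= add0n mul1r.
  have kR : k%:R != 0 :> R by rewrite pnatr_eq0 -lt0n k1.
  rewrite powRD; last by rewrite pnatr_eq0 -lt0n n1 implybT.
  rewrite powRr1 ?ler0n // !natrM !mulrA; apply: ler_wpM2l; first by rewrite mulr_ge0 ?ler0n.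
  have E1 : (m.-1%:R : R) = (m.-1%:R ^+ k) `^ k%:R^-1.
    by rewrite -powR_mulrn ?ler0n // -powRrM mulfV // powRr1 // ler0n.
  rewrite {1}E1; apply: ge0_ler_powR; first by rewrite invr_ge0 ler0n.
  - by rewrite nnegrE exprn_ge0 ?ler0n.
  - by rewrite nnegrE ler0n.
  by rewrite -natrX ler_nat ltnW.
split.
  move=> i; rewrite runE; have := hptsi i; rewrite -!index_mem -SE => /andP[a b].
  by split; [exact: a|exact: b].
split; last first.
  move=> i; rewrite LE RE.
  have [_ hbn hx hy] := hone i; have [h0 h1] := hbnd i.
  have [a0 a1 av] := mk_ok hv n1 i (leq_trans (leq_addr 1 _) hbn).
  have [b0 b1 bvv] := mk_ok hv n1 i hbn.
  rewrite (Vint_sub (hv i) h0 (hxy i) h1).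
  apply: le_trans (lerB (Vcum_mono (hv i) b0 hy h1) (Vcum_mono (hv i) h0 hx a1)).
  by rewrite av bvv -mulrBl natrD addrAC subrr add0r mul1r.
split.
  move=> i; rewrite LE RE; have [h1 h2] := hbnd i.
  by rewrite h1 h2 hxy.
split.
  move=> i j ij; rewrite !LE !RE.
  case: (ltngtP (pos st i) (pos st j)) => h.
  - by left; apply: (chain_ord c1 hall_le h (hpos j)).
  - by right; apply: (chain_ord c1 hall_le h (hpos i)).
  - have E : spi st i = spi st j by rewrite /spi h.
    have [p1 _ _ _] := hone i; have [p2 _ _ _] := hone j.
    by move: p1; rewrite E p2 => -[eij]; move: ij; rewrite eij eqxx.
rewrite (eq_bigr (fun i => yr (spi st i) - xl (spi st i))); last by move=> i _; rewrite LE RE.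
have -> : \sum_(i < n) (yr (spi st i) - xl (spi st i)) =
          \sum_(i <- enum 'I_n) (yr (spi st i) - xl (spi st i)) by rewrite big_enum.
rewrite -(perm_big _ c3) (sum_chain c1) ?subr0 //.
  by apply: (sub_all _ c2) => p /and4P[a b _ _]; rewrite eqn_leq a b.
by rewrite (perm_uniq c3) enum_uniq.
Qed.
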